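(* Let $G$ be a connected simple cubic graph such that the Petersen graph $P$ admits a $G$-coloring. Then $G$ is isomorphic to $P$.
   Context: A simple graph has no loops and no parallel edges; a cubic graph is $3$-regular. For a graph $X$ and vertex $x$, $\partial_X(x)$ denotes the set of edges of $X$ incident to $x$. For cubic graphs $G, H$ (loopless, parallel edges allowed), an $H$-coloring of $G$ is a map $f: E(G)\to E(H)$ such that for every vertex $x$ of $G$ there is a vertex $y$ of $H$ with $f(\partial_G(x))=\partial_H(y)$. $P$ denotes the Petersen graph. *)

(* Defs.v *)
From mathcomp Require Import all_boot.
Set Implicit Arguments. Unset Strict Implicit. Unset Printing Implicit Defensive.

Definition simple_graph (V : finType) (e : rel V) : Prop :=
  symmetric e /\ irreflexive e.

Definition cubic (V : finType) (e : rel V) : Prop :=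
  forall x : V, #|[set y | e x y]| = 3.

Definition connected_graph (V : finType) (e : rel V) : Prop :=
  forall x y : V, connect e x y.

Definition edges (V : finType) (e : rel V) : {set {set V}} :=
  [set [set x; y] | x in V, y in V & e x y].

Definition dedges (V : finType) (e : rel V) (x : V) : {set {set V}} :=
  [set E in edges e | x \in E].

(* An H-coloring of G (both simple): f : E(G) -> E(H) with
   f(partial_G(x)) = partial_H(y) for some y, for every vertex x of G.
   f is given as a total function on sets; only its values on E(G) matter. *)
Definition H_coloring (VG : finType) (eG : rel VG) (VH : finType) (eH : rel VH)
  (f : {set VG} -> {set VH}) : Prop :=
  (forall E, E \in edges eG -> f E \in edges eH) /\
  forall x : VG, exists y : VH, f @: dedges eG x = dedges eH y.

Definition admits_coloring (VG : finType) (eG : rel VG) (VH : finType) (eH : rel VH) : Prop :=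
  exists f : {set VG} -> {set VH}, H_coloring eG eH f.

(* Petersen graph: Kneser graph K(5,2). *)
Definition petV : finType := {A : {set 'I_5} | #|A| == 2}.
Definition petE : rel petV := fun A B => [disjoint val A & val B].

Definition isomorphic (V1 : finType) (e1 : rel V1) (V2 : finType) (e2 : rel V2) : Prop :=
  exists phi : V1 -> V2, bijective phi /\ forall x y, e2 (phi x) (phi y) = e1 x y.

(* Main.v *)
Require Import Defs.
From mathcomp Require Import all_boot.
Set Implicit Arguments. Unset Strict Implicit. Unset Printing Implicit Defensive.

Definition adjt : seq (seq nat) :=
  [:: [:: 1; 2; 3]; [:: 0; 4; 5]; [:: 0; 6; 7]; [:: 0; 8; 9]; [:: 1; 7; 9];
      [:: 1; 6; 8]; [:: 2; 5; 9]; [:: 2; 4; 8]; [:: 3; 5; 7]; [:: 3; 4; 6]].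
Definition adj (i t : nat) : nat := nth 0 (nth [::] adjt i) t.
Definition pl : seq (nat*nat) :=
  [:: (0,1);(2,3);(2,4);(3,4);(0,4);(1,4);(0,3);(1,3);(0,2);(1,2)].

Definition mkS (a b : nat) : {set 'I_5} := [set inord a; inord b].

Lemma inord_eq5 a b : a < 5 -> b < 5 -> (inord a == inord b :> 'I_5) = (a == b).
Proof. by move=> Ha Hb; rewrite -(inj_eq val_inj) /= !inordK. Qed.

Lemma mkS_card a b : a < 5 -> b < 5 -> a != b -> #|mkS a b| == 2.
Proof. by move=> Ha Hb Hab; rewrite /mkS cards2 inord_eq5 ?Hab. Qed.

Lemma p01 : #|mkS 0 1| == 2. Proof. exact: mkS_card. Qed.
Definition x0 : petV := Sub (mkS 0 1) p01.
Definition vtx (i : nat) : petV := let p := nth (0,0) pl i in insubd x0 (mkS p.1 p.2).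

Lemma pl_ok : all (fun p => [&& p.1 < 5, p.2 < 5 & p.1 != p.2]) pl.
Proof. by []. Qed.

Lemma val_vtx i : i < 10 -> val (vtx i) = mkS (nth (0,0) pl i).1 (nth (0,0) pl i).2.
Proof.
move=> Hi; rewrite /vtx insubdK //.
have /allP /(_ (nth (0,0) pl i)) := pl_ok.
by rewrite mem_nth // => /(_ isT) /and3P [H1 H2 H3]; apply: mkS_card.
Qed.

Lemma disj2 (T : finType) (a b : T) (B : {pred T}) :
  [disjoint [set a; b] & B] = (a \notin B) && (b \notin B).
Proof.
apply/pred0P/andP => [H | [Ha Hb] x /=].
  split; apply/negP => HB.
    by move: (H a); rewrite /= in_set2 eqxx HB.
  by move: (H b); rewrite /= in_set2 eqxx orbT HB.
rewrite in_set2; apply/negP => /andP [/orP [] /eqP -> ]; by [rewrite (negbTE Ha) | rewrite (negbTE Hb)].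
Qed.

Definition pdisj (p q : nat * nat) : bool :=
  [&& p.1 != q.1, p.1 != q.2, p.2 != q.1 & p.2 != q.2].

Lemma petE_mk a b c d : a < 5 -> b < 5 -> c < 5 -> d < 5 ->
  [disjoint mkS a b & mkS c d] = pdisj (a, b) (c, d).
Proof.
move=> Ha Hb Hc Hd; rewrite /mkS disj2 !in_set2 !inord_eq5 //.
by rewrite /pdisj /= !negb_or -!andbA.
Qed.

Lemma tab_ok : all (fun i => all (fun j =>
   pdisj (nth (0,0) pl i) (nth (0,0) pl j) == (j \in nth [::] adjt i)) (iota 0 10)) (iota 0 10).
Proof. by []. Qed.

Lemma petE_vtx i j : i < 10 -> j < 10 -> petE (vtx i) (vtx j) = (j \in nth [::] adjt i).
Proof.
move=> Hi Hj; rewrite /petE val_vtx // val_vtx //.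
have /allP /(_ (nth (0,0) pl i)) := pl_ok; rewrite mem_nth ?size_pl // => /(_ isT) /and3P [? ? _].
have /allP /(_ (nth (0,0) pl j)) := pl_ok; rewrite mem_nth ?size_pl // => /(_ isT) /and3P [? ? _].
rewrite petE_mk //.
have /allP /(_ i) := tab_ok; rewrite mem_iota add0n Hi => /(_ isT) /allP /(_ j).
by rewrite mem_iota add0n Hj => /(_ isT) /eqP; case: (nth _ pl i) => ??; case: (nth _ pl j).
Qed.

Lemma pl_cover : all (fun a => all (fun b => (a != b) ==>
  has (fun i => (nth (0,0) pl i == (a,b)) || (nth (0,0) pl i == (b,a))) (iota 0 10)) (iota 0 5)) (iota 0 5).
Proof. by []. Qed.

Lemma vtx_surj (x : petV) : exists2 i, i < 10 & x = vtx i.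
Proof.
case: x => A HA; have /cards2P [a [b [Hab HAe]]] := HA.
have /allP /(_ (val a)) := pl_cover; rewrite mem_iota add0n ltn_ord => /(_ isT).
move=> /allP /(_ (val b)); rewrite mem_iota add0n ltn_ord => /(_ isT).
rewrite (inj_eq val_inj) Hab => /hasP [i]; rewrite mem_iota add0n => Hi Hp.
exists i => //; apply: val_inj; rewrite val_vtx //= HAe /mkS.
case/orP: Hp => /eqP -> /=; rewrite !inord_val //; exact: setUC.
Qed.

Lemma adjt_ok : all (fun i => nth [::] adjt i == [:: adj i 0; adj i 1; adj i 2]) (iota 0 10).
Proof. by []. Qed.
Lemma adj_lt : all (fun i => all (fun t => adj i t < 10) (iota 0 3)) (iota 0 10).
Proof. by []. Qed.

Lemma adj_lt10 i t : i < 10 -> t < 3 -> adj i t < 10.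
Proof.
move=> Hi Ht; have /allP /(_ i) := adj_lt; rewrite mem_iota Hi => /(_ isT) /allP /(_ t).
by rewrite mem_iota Ht => /(_ isT).
Qed.

Lemma adjt_i i : i < 10 -> nth [::] adjt i = [:: adj i 0; adj i 1; adj i 2].
Proof.
by move=> Hi; have /allP /(_ i) := adjt_ok; rewrite mem_iota Hi => /(_ isT) /eqP.
Qed.

Lemma petE_sym : symmetric petE.
Proof. by move=> x y; rewrite /petE disjoint_sym. Qed.

Lemma nbr_in i t : i < 10 -> t < 3 -> petE (vtx i) (vtx (adj i t)).
Proof.
move=> Hi Ht; rewrite petE_vtx ?adj_lt10 // adjt_i //.
by case: t Ht => [|[|[|]]] //= _; rewrite !inE eqxx ?orbT.
Qed.

Lemma nbr_ex i y : i < 10 -> petE (vtx i) y -> exists2 t, t < 3 & y = vtx (adj i t).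
Proof.
move=> Hi; have [j Hj ->] := vtx_surj y; rewrite petE_vtx // adjt_i // !inE.
by case/or3P => /eqP ->; [exists 0 | exists 1 | exists 2].
Qed.

Lemma edgesP (T : finType) (r : rel T) E :
  reflect (exists a b, r a b /\ E = [set a; b]) (E \in edges r).
Proof.
apply: (iffP imset2P) => [[a b _] | [a [b [Hab ->]]]].
  by rewrite inE => Hab ->; exists a, b.
by exists a b => //; rewrite inE.
Qed.

Lemma edge_in (T : finType) (r : rel T) a b : r a b -> [set a; b] \in edges r.
Proof. by move=> H; apply/edgesP; exists a, b. Qed.

Lemma dedgesP (T : finType) (r : rel T) x E : symmetric r ->
  reflect (exists y, r x y /\ E = [set x; y]) (E \in dedges r x).
Proof.
move=> Hs; rewrite inE; apply: (iffP andP) => [[/edgesP [a [b [Hab ->]]]] | [y [Hy ->]]].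
  by rewrite in_set2 => /orP [] /eqP ->; [exists b | exists a; rewrite Hs setUC].
by split; [apply: edge_in | rewrite in_set2 eqxx].
Qed.

Lemma set2_eq_r (T : finType) (y p q : T) : [set y; p] = [set y; q] -> p != y -> p = q.
Proof.
move=> H Hp; have : p \in [set y; q] by rewrite -H in_set2 eqxx orbT.
by rewrite in_set2 (negbTE Hp) => /eqP.
Qed.

Lemma edge_pair (T : finType) (r : rel T) E a b :
  E \in edges r -> a \in E -> b \in E -> a != b -> E = [set a; b].
Proof.
case/edgesP => [c [d [_ ->]]]; rewrite !in_set2.
by case/orP => /eqP ->; case/orP => /eqP ->; rewrite ?eqxx // => _; rewrite setUC.
Qed.

Lemma edge_rel (T : finType) (r : rel T) a b : symmetric r -> a != b ->
  [set a; b] \in edges r -> r a b.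
Proof.
move=> Hs Hab /edgesP [c [d [Hcd He]]].
have Ha : a \in [set c; d] by rewrite -He in_set2 eqxx.
have Hb : b \in [set c; d] by rewrite -He in_set2 eqxx orbT.
move: Ha Hb Hab; rewrite !in_set2 => /orP [] /eqP -> /orP [] /eqP ->; rewrite ?eqxx //.
by rewrite Hs.
Qed.

Lemma dedges_card (T : finType) (r : rel T) y : simple_graph r -> cubic r -> #|dedges r y| = 3.
Proof.
move=> [Hs Hi] Hc; rewrite -(Hc y).
have -> : dedges r y = (fun z => [set y; z]) @: [set z | r y z].
  apply/setP => E; apply/dedgesP/imsetP => // [[z [Hz ->]] | [z]].
    by exists z; rewrite ?inE.
  by rewrite inE => Hz ->; exists z.
apply: card_in_imset => z1 z2; rewrite !inE => H1 H2 /set2_eq_r -> //.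
by apply/eqP => E; move: H1; rewrite E Hi.
Qed.

Lemma card3_dist (T : finType) (a b c : T) : #|[set a; b; c]| = 3 ->
  [/\ a != b, a != c & b != c].
Proof.
move=> H.
have K : forall x y, [set a; b; c] \subset [set x; y] -> False.
  move=> x y /subset_leq_card; rewrite H cards2; by case: (_ != _).
split; apply/negP => /eqP E.
- by apply: (K b c); apply/subsetP => z; rewrite !inE E; case: (z == b); case: (z == c).
- by apply: (K b c); apply/subsetP => z; rewrite !inE E; case: (z == b); case: (z == c).
- by apply: (K a c); apply/subsetP => z; rewrite !inE E; case: (z == a); case: (z == c).
Qed.

Definition A := (nat * (nat * nat * nat))%type.
Definition dA : A := (0, (0, 0, 0)).
Definition sg (a : A) (t : nat) : nat :=
  match t with 0 => a.2.1.1 | 1 => a.2.1.2 | _ => a.2.2 end.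

Definition hold4 (ai aj au aw : A) (i j t t' u w : nat) : bool :=
  (ai.1 == aj.1) ==>
  ( ((au.1 == ai.1) && (u == j) && (w == i) ==> (sg ai t == sg aj t')) &&
    ((au.1 != ai.1) && (aw.1 != aj.1) ==> ((au.1 == aw.1) == (sg ai t == sg aj t')))).

Definition inst := (nat * nat * nat * nat)%type.
Definition holds (s : seq A) (x : inst) : bool :=
  let: (i, j, t, t') := x in
  let u := adj i t in let w := adj j t' in
  hold4 (nth dA s i) (nth dA s j) (nth dA s u) (nth dA s w) i j t t' u w.
Definition maxi (x : inst) : nat :=
  let: (i, j, t, t') := x in maxn (maxn i j) (maxn (adj i t) (adj j t')).
Definition insts : seq inst :=
  flatten [seq flatten [seq [seq (i, j, t, t') | t <- iota 0 3, t' <- iota 0 3] | j <- iota 0 10] | i <- iota 0 10].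
Definition tab : seq (seq inst) :=
  Eval vm_compute in [seq [seq x <- insts | maxi x == n] | n <- iota 0 10].
Definition okp (s : seq A) : bool :=
  all (holds s) (nth [::] tab (size s).-1).
Definition perms : seq (nat * nat * nat) :=
  [:: (0,1,2); (0,2,1); (1,0,2); (1,2,0); (2,0,1); (2,1,0)].
Definition dom (n : nat) (s : seq A) : seq A :=
  (n, (0,1,2)) :: [seq (L, p) | L <- [seq L <- iota 0 n | (nth dA s L).1 == L], p <- perms].
Definition final (s : seq A) : bool := all (fun i => (nth dA s i).1 == i) (iota 0 10).
Fixpoint search (n : nat) (s : seq A) : bool :=
  match n with
  | 0 => final s
  | n'.+1 => all (fun a => let s' := rcons s a in if okp s' then search n' s' else true) (dom (size s) s)
  end.

Lemma search_ok : search 10 [::].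
Proof. vm_cast_no_check (erefl true). Qed.

Definition inrange (x : inst) : bool :=
  let: (i, j, t, t') := x in [&& i < 10, j < 10, t < 3 & t' < 3].

Lemma tab_good : all (fun n => all (fun x => (maxi x == n) && inrange x) (nth [::] tab n)) (iota 0 10).
Proof. by vm_compute. Qed.

Lemma tab_mem n x : x \in nth [::] tab n -> maxi x = n /\ inrange x.
Proof.
case: (ltnP n 10) => Hn; last by rewrite nth_default.
have /allP /(_ n) := tab_good; rewrite mem_iota Hn => /(_ isT) /allP H /H.
by case/andP => /eqP.
Qed.

Lemma holds_take k s x : maxi x < k -> holds (take k s) x = holds s x.
Proof.
case: x => [[[i j] t] t']; rewrite /maxi /holds !gtn_max => /andP [/andP [Hi Hj] /andP [Hu Hw]].
by rewrite !nth_take.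
Qed.

Lemma search_sound (S : seq A) : size S = 10 ->
  (forall x, inrange x -> holds S x) ->
  (forall k, k < 10 -> nth dA S k \in dom k (take k S)) ->
  forall i, i < 10 -> (nth dA S i).1 = i.
Proof.
move=> Hsz Hh Hd.
have key : forall n k, n + k = 10 -> search n (take k S) -> final S.
  elim => [|n IH] k.
    by rewrite /= add0n => ->; rewrite -{1}Hsz take_size.
  move=> Hnk Hs.
  have Hall : {in dom (size (take k S)) (take k S), forall a,
     (fun a => if okp (rcons (take k S) a) then search n (rcons (take k S) a) else true) a}.
    exact: (allP Hs).
  have Hk : k < 10 by rewrite -Hnk addSn ltnS leq_addl.
  have Hsk : size (take k S) = k by rewrite size_take Hsz Hk.
  have := Hall (nth dA S k); rewrite Hsk => /(_ (Hd k Hk)).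
  rewrite -take_nth ?Hsz //.
  have -> : okp (take k.+1 S).
    apply/allP => x; rewrite size_takel ?Hsz // => /tab_mem [Hm Hr].
    by rewrite holds_take ?Hm // Hh.
  by apply: IH; rewrite addnS.
move=> i Hi; have := key 10 0 erefl; rewrite take0 => /(_ search_ok) /allP /(_ i).
by rewrite mem_iota Hi => /(_ isT) /eqP.
Qed.

Lemma perm3 a b c : a < 3 -> b < 3 -> c < 3 -> a != b -> a != c -> b != c ->
  (a, b, c) \in perms.
Proof.
by case: a => [|[|[|]]] //; case: b => [|[|[|]]] //; case: c => [|[|[|]]].
Qed.

Lemma find_le (T : Type) (p : pred T) (s : seq T) x0 k : p (nth x0 s k) -> find p s <= k.
Proof. by move=> H; rewrite leqNgt; apply/negP => /(before_find x0); rewrite H. Qed.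

Definition ed (i t : nat) : {set petV} := [set vtx i; vtx (adj i t)].

Lemma ded_vtx i : i < 10 -> dedges petE (vtx i) = [set ed i 0; ed i 1; ed i 2].
Proof.
move=> Hi; apply/setP => E; apply/(dedgesP _ _ petE_sym)/idP.
  move=> [y [/(nbr_ex Hi) [t Ht ->] ->]].
  by rewrite !inE; case: t Ht => [|[|[|]]] //= _; rewrite eqxx ?orbT.
rewrite !inE -orbA => /or3P [] /eqP ->; [exists (vtx (adj i 0)) | exists (vtx (adj i 1)) | exists (vtx (adj i 2))];
  by split => //; apply: nbr_in.
Qed.

Lemma ed_in2 i t : i < 10 -> t < 3 -> ed i t \in dedges petE (vtx (adj i t)).
Proof.
move=> Hi Ht; apply/(dedgesP _ _ petE_sym); exists (vtx i); split; last by rewrite /ed setUC.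
by rewrite petE_sym; apply: nbr_in.
Qed.

Lemma ed_in1 i t : i < 10 -> t < 3 -> ed i t \in dedges petE (vtx i).
Proof. move=> Hi Ht; apply/(dedgesP _ _ petE_sym); exists (vtx (adj i t)); split => //; exact: nbr_in. Qed.


Lemma g_inj (V : finType) (e : rel V) (f : {set petV} -> {set V}) (g : petV -> V) :
  simple_graph e -> cubic e ->
  (forall x, f @: dedges petE x = dedges e (g x)) -> injective g.
Proof.
move=> Hsimp Hcub Hg.
have Hsym : symmetric e by case: Hsimp.
pose col i t := f (ed i t).
have Hcolset : forall i, i < 10 -> dedges e (g (vtx i)) = [set col i 0; col i 1; col i 2].
  by move=> i Hi; rewrite -Hg ded_vtx // !imsetU !imset_set1.
have Hdist : forall i, i < 10 -> [/\ col i 0 != col i 1, col i 0 != col i 2 & col i 1 != col i 2].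
  by move=> i Hi; apply: card3_dist; rewrite -Hcolset // dedges_card.
have Hcolin : forall i t, i < 10 -> t < 3 -> col i t \in dedges e (g (vtx i)).
  by move=> i t Hi Ht; rewrite -Hg; apply: imset_f; apply: ed_in1.
have Hcolin2 : forall i t, i < 10 -> t < 3 -> col i t \in dedges e (g (vtx (adj i t))).
  by move=> i t Hi Ht; rewrite -Hg; apply: imset_f; apply: ed_in2.
pose L i := find (fun j => g (vtx j) == g (vtx i)) (iota 0 10).
have HL : forall i, i < 10 -> L i <= i /\ g (vtx (L i)) = g (vtx i).
  move=> i Hi; have Hp : (fun j => g (vtx j) == g (vtx i)) (nth 0 (iota 0 10) i) by rewrite nth_iota.
  have Hle : L i <= i := @find_le _ (fun j => g (vtx j) == g (vtx i)) (iota 0 10) 0 i Hp.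
  split => //.
  have Hhas : has (fun j => g (vtx j) == g (vtx i)) (iota 0 10).
    by rewrite has_find size_iota (leq_ltn_trans Hle).
  have := nth_find 0 Hhas; rewrite nth_iota ?(leq_ltn_trans Hle) // add0n => /eqP.
  done.
have HL10 : forall i, i < 10 -> L i < 10 by move=> i Hi; case: (HL i Hi) => H _; exact: leq_ltn_trans H Hi.
have HLeq : forall i j, i < 10 -> j < 10 -> (L i == L j) = (g (vtx i) == g (vtx j)).
  move=> i j Hi Hj; apply/eqP/eqP => [E | E].
    by rewrite -(HL i Hi).2 -(HL j Hj).2 E.
  by rewrite /L E.
have HLL : forall i, i < 10 -> L (L i) = L i.
  by move=> i Hi; apply/eqP; rewrite HLeq ?HL10 // (HL i Hi).2.
pose sig i t := find (fun t0 => col (L i) t0 == col i t) (iota 0 3).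
have Hsig : forall i t, i < 10 -> t < 3 -> sig i t < 3 /\ col (L i) (sig i t) = col i t.
  move=> i t Hi Ht.
  have Hin : col i t \in [set col (L i) 0; col (L i) 1; col (L i) 2].
    by rewrite -Hcolset ?HL10 // (HL i Hi).2 Hcolin.
  have Hhas : has (fun t0 => col (L i) t0 == col i t) (iota 0 3).
    by move: Hin; rewrite !inE -orbA /= => /or3P [] /eqP <-; rewrite eqxx ?orbT.
  have Hlt : sig i t < 3 by rewrite -(size_iota 0 3) -has_find.
  split => //; have := nth_find 0 Hhas; rewrite nth_iota // add0n => /eqP //.
have Hsigeq : forall i j t t', i < 10 -> j < 10 -> t < 3 -> t' < 3 -> L i = L j ->
    (sig i t == sig j t') = (col i t == col j t').
  move=> i j t t' Hi Hj Ht Ht' Eij; apply/eqP/eqP => [E | E].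
    by rewrite -(Hsig i t Hi Ht).2 -(Hsig j t' Hj Ht').2 E Eij.
  by rewrite /sig Eij E.
have Hsigdist : forall i, i < 10 -> [/\ sig i 0 != sig i 1, sig i 0 != sig i 2 & sig i 1 != sig i 2].
  by move=> i Hi; case: (Hdist i Hi) => H1 H2 H3; rewrite !Hsigeq.
have HsigL : forall i t, i < 10 -> t < 3 -> L i = i -> sig i t = t.
  move=> i t Hi Ht HLi; case: (Hdist i Hi) => H1 H2 H3.
  rewrite /sig HLi; case: t Ht => [|[|[|]]] //= _; rewrite ?eqxx //.
    by rewrite (negbTE H1).
  by rewrite (negbTE H2) (negbTE H3).
pose S := [seq (L i, (sig i 0, sig i 1, sig i 2)) | i <- iota 0 10].
have HS : forall i, i < 10 -> nth dA S i = (L i, (sig i 0, sig i 1, sig i 2)).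
  move=> i Hi; rewrite (nth_map 0); last by rewrite size_iota.
  by rewrite nth_iota // add0n.
have Hsg : forall i t, i < 10 -> t < 3 -> sg (nth dA S i) t = sig i t.
  by move=> i t Hi Ht; rewrite HS //; case: t Ht => [|[|[|]]].
have Hcolpair : forall i t, i < 10 -> t < 3 -> L (adj i t) != L i ->
    col i t = [set g (vtx i); g (vtx (adj i t))].
  move=> i t Hi Ht Hne.
  have H1 := Hcolin i t Hi Ht; have H2 := Hcolin2 i t Hi Ht.
  move: H1 H2; rewrite !inE => /andP [He Hm1] /andP [_ Hm2].
  apply: edge_pair He Hm1 Hm2 _.
  by rewrite -HLeq ?adj_lt10 // eq_sym.
have Hholds : forall x, inrange x -> holds S x.
  case=> [[[i j] t] t'] /and4P [Hi Hj Ht Ht'].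
  have Hu := adj_lt10 Hi Ht; have Hw := adj_lt10 Hj Ht'.
  rewrite /holds /hold4 !Hsg // !HS //=.
  apply/implyP => /eqP Eij; apply/andP; split.
    apply/implyP => /andP [/andP [_ /eqP Eu] /eqP Ew]; rewrite Hsigeq //.
    by rewrite /col /ed Eu Ew setUC.
  apply/implyP => /andP [Hne1 Hne2]; rewrite Hsigeq //.
  rewrite (Hcolpair i t) // (Hcolpair j t') //.
  have -> : g (vtx j) = g (vtx i) by apply/eqP; rewrite -HLeq // Eij.
  rewrite HLeq //; apply/eqP; apply/idP/idP => [/eqP -> // | /eqP E]; apply/eqP.
  apply: set2_eq_r E _; by rewrite -HLeq.
have Hdom : forall k, k < 10 -> nth dA S k \in dom k (take k S).
  move=> k Hk; rewrite HS //.
  case: (L k =P k) => HLk.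
    by rewrite HLk !HsigL //; apply: mem_head.
  rewrite inE; apply/orP; right; apply: allpairs_f; last first.
    have h0 := (Hsig k 0 Hk isT).1; have h1 := (Hsig k 1 Hk isT).1; have h2 := (Hsig k 2 Hk isT).1.
    by case: (Hsigdist k Hk) => d1 d2 d3; exact: perm3 h0 h1 h2 d1 d2 d3.
  have HLlt : L k < k by rewrite ltn_neqAle (HL k Hk).1 andbT; apply/eqP.
  rewrite mem_filter mem_iota HLlt nth_take // HS ?HL10 //= HLL //.
  by rewrite eqxx.
have Hsz : size S = 10 by rewrite size_map size_iota.
have Hfinl := @search_sound S Hsz Hholds Hdom.
have HLid : forall i, i < 10 -> L i = i by move=> i Hi; move: (Hfinl i Hi); rewrite HS.
move=> x y; have [i Hi ->] := vtx_surj x; have [j Hj ->] := vtx_surj y; move=> Exy.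
have : L i == L j by rewrite HLeq // Exy.
by rewrite !HLid // => /eqP ->.
Qed.

Lemma petE_irr : irreflexive petE.
Proof.
case=> A HA; rewrite /petE /=; apply/negP => Hd.
have /cards2P [a [b [_ HAe]]] := HA.
have Ha : a \in A by rewrite HAe in_set2 eqxx.
by have := disjointFr Hd Ha; rewrite Ha.
Qed.

Theorem theorem5 (V : finType) (e : rel V) :
  simple_graph e -> cubic e -> connected_graph e ->
  admits_coloring petE e ->
  isomorphic e petE.
Proof.
move=> Hsimp Hcub Hconn [f [Hf1 Hf2]].
have [Hsym Hirr] := Hsimp.
have Hex : forall x, exists y, f @: dedges petE x == dedges e y.
  by move=> x; have [y Hy] := Hf2 x; exists y; apply/eqP.
pose g x := xchoose (Hex x).
have Hg : forall x, f @: dedges petE x = dedges e (g x) by move=> x; apply/eqP; exact: (xchooseP (Hex x)).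
have Hinj := g_inj Hsimp Hcub Hg.
have Hgx : forall x y, petE x y -> f [set x; y] = [set g x; g y] /\ e (g x) (g y).
  move=> x y Hxy.
  have H1 : [set x; y] \in dedges petE x by apply/(dedgesP _ _ petE_sym); exists y.
  have H2 : [set x; y] \in dedges petE y.
    by apply/(dedgesP _ _ petE_sym); exists x; rewrite petE_sym setUC.
  have K1 : f [set x; y] \in dedges e (g x) by rewrite -Hg; apply: imset_f.
  have K2 : f [set x; y] \in dedges e (g y) by rewrite -Hg; apply: imset_f.
  move: K1 K2; rewrite !inE => /andP [Hed Hm1] /andP [_ Hm2].
  have Hne : g x != g y.
    by apply/negP => /eqP /Hinj E; move: Hxy; rewrite E petE_irr.
  have Ef := edge_pair Hed Hm1 Hm2 Hne.
  split => //; apply: edge_rel Hsym Hne _; by rewrite -Ef.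
have Hcl : forall x z, e (g x) z -> exists2 y, petE x y & g y = z.
  move=> x z Hz.
  have : [set g x; z] \in dedges e (g x) by apply/(dedgesP _ _ Hsym); exists z.
  rewrite -Hg => /imsetP [E /(dedgesP _ _ petE_sym) [y [Hxy ->]] Ef].
  exists y => //; rewrite (Hgx x y Hxy).1 in Ef.
  apply/esym/(set2_eq_r Ef); apply/negP => /eqP Ez; by move: Hz; rewrite Ez Hirr.
have Hsurj : forall z, exists x, g x = z.
  move=> z; have /connectP [p Hp ->] := Hconn (g x0) z.
  elim: p x0 Hp => [|a p IH] x Hp /=; first by exists x.
  move: Hp => /= /andP [Ha Hp].
  have [y _ Ey] := Hcl x a Ha.
  by rewrite -Ey in Hp *; exact: IH Hp.
pose phi z := odflt x0 [pick x | g x == z].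
have Hgphi : forall z, g (phi z) = z.
  move=> z; rewrite /phi; case: pickP => [x /eqP // | H].
  by have [x Hx] := Hsurj z; move: (H x); rewrite Hx eqxx.
have Hphig : forall x, phi (g x) = x by move=> x; apply: Hinj; rewrite Hgphi.
exists phi; split; first by exists g.
move=> a b; rewrite -{2}(Hgphi a) -{2}(Hgphi b).
apply/idP/idP => [/Hgx [] // | /Hcl [y Hy Ey]].
by move: Hy; rewrite (Hinj _ _ Ey).
Qed.
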